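(* Let $\mathcal{M}$ be a saturated model of Presburger arithmetic and $\mathcal{M}_0\preceq\mathcal{M}$ small. Let $\phi(x,a)$, with $x$ a single variable and $a\in\mathcal{M}^k$, define either a single point or a bounded $1$-cell in $\mathcal{M}$, and suppose $\phi(\mathcal{M},a)\cap\mathcal{M}_0=\emptyset$. Then there is $a'\in\mathcal{M}^k$ such that $\mathrm{tp}(a/\mathcal{M}_0)=\mathrm{tp}(a'/\mathcal{M}_0)$ and $\phi(\mathcal{M},a)\cap\phi(\mathcal{M},a')=\emptyset$.
   Context: Presburger arithmetic is $\mathrm{Th}(\mathbb{Z},+,-,<,0,1,\{\equiv_n\}_n)$. A bounded $1$-cell is an infinite set of the form $\{x\in\mathcal{M}:\alpha\le x\le\beta,\ x\equiv_N c\}$ with $\alpha,\beta\in\mathcal{M}$ and $0\le c<N$ integers. *)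

(* Defs.v *)
From Stdlib Require Import ZArith List Arith PeanoNat.

Inductive term : Type :=
| TVar (n : nat)
| TZero
| TOne
| TAdd (t u : term)
| TSub (t u : term).

Inductive formula : Type :=
| FEq (t u : term)
| FLt (t u : term)
| FCong (n : positive) (t u : term)
| FFalse
| FNot (p : formula)
| FAnd (p q : formula)
| FOr (p q : formula)
| FEx (n : nat) (p : formula)
| FAll (n : nat) (p : formula).

Record PStruct : Type := {
  car : Type;
  zero : car;
  one : car;
  add : car -> car -> car;
  sub : car -> car -> car;
  lt : car -> car -> Prop;
  cong : positive -> car -> car -> Prop
}.

Definition upd {M : PStruct} (e : nat -> car M) (n : nat) (b : car M) : nat -> car M :=
  fun i => if Nat.eqb i n then b else e i.

Fixpoint eval (M : PStruct) (e : nat -> car M) (t : term) : car M :=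
  match t with
  | TVar n => e n
  | TZero => zero M
  | TOne => one M
  | TAdd t u => add M (eval M e t) (eval M e u)
  | TSub t u => sub M (eval M e t) (eval M e u)
  end.

Fixpoint sat (M : PStruct) (e : nat -> car M) (p : formula) : Prop :=
  match p with
  | FEq t u => eval M e t = eval M e u
  | FLt t u => lt M (eval M e t) (eval M e u)
  | FCong n t u => cong M n (eval M e t) (eval M e u)
  | FFalse => False
  | FNot p => ~ sat M e p
  | FAnd p q => sat M e p /\ sat M e q
  | FOr p q => sat M e p \/ sat M e q
  | FEx n p => exists b, sat M (upd e n b) p
  | FAll n p => forall b, sat M (upd e n b) p
  end.

Definition Zstr : PStruct := {|
  car := Z; zero := 0%Z; one := 1%Z; add := Z.add; sub := Z.sub;
  lt := Z.lt; cong := fun n x y => Z.divide (Zpos n) (x - y)%Z |}.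

(* M |= Th(Z): every formula valid in Z (i.e. whose universal closure is
   in Th(Z)) is valid in M. *)
Definition presburger_model (M : PStruct) : Prop :=
  forall p : formula, (forall e : nat -> Z, sat Zstr e p) ->
    forall e : nat -> car M, sat M e p.

Definition elementary_emb (M0 M : PStruct) (f : car M0 -> car M) : Prop :=
  forall (p : formula) (e : nat -> car M0),
    sat M0 e p <-> sat M (fun i => f (e i)) p.

Definition small_subset (M : PStruct) (A : car M -> Prop) : Prop :=
  ~ exists g : car M -> {x : car M | A x},
      forall x y, g x = g y -> x = y.

Definition small_model (M0 M : PStruct) : Prop :=
  ~ exists g : car M -> car M0, forall x y, g x = g y -> x = y.

(* A "formula with parameters" is a pair (p, e). *)
Definition saturated (M : PStruct) : Prop :=
  forall (A : car M -> Prop), small_subset M A ->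
  forall (P : formula -> (nat -> car M) -> Prop),
    (forall p e, P p e -> forall i, i <> 0 -> A (e i)) ->
    (forall l : list (formula * (nat -> car M)),
        (forall q, In q l -> P (fst q) (snd q)) ->
        exists b, forall q, In q l -> sat M (upd (snd q) 0 b) (fst q)) ->
    exists b, forall p e, P p e -> sat M (upd e 0 b) p.

(* phi(M, a) where x = v_0 and a = (a 0, ..., a (k-1)) is substituted for
   v_1, ..., v_k; remaining variables are set to 0 (a 0-definable constant). *)
Definition defset (M : PStruct) (phi : formula) (k : nat) (a : nat -> car M)
  : car M -> Prop :=
  fun x => sat M (fun i => match i with
                           | 0 => x
                           | S j => if Nat.ltb j k then a j else zero M
                           end) phi.

Definition le (M : PStruct) (x y : car M) : Prop := lt M x y \/ x = y.

Definition numeral (M : PStruct) (c : nat) : car M :=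
  Nat.iter c (fun y => add M y (one M)) (zero M).

Definition infinite_set (M : PStruct) (S : car M -> Prop) : Prop :=
  ~ exists l : list (car M), forall x, S x -> In x l.

Definition single_point (M : PStruct) (S : car M -> Prop) : Prop :=
  exists p, forall x, S x <-> x = p.

Definition bounded_1cell (M : PStruct) (S : car M -> Prop) : Prop :=
  exists (alpha beta : car M) (N : positive) (c : nat),
    c < Pos.to_nat N /\
    (forall x, S x <-> le M alpha x /\ le M x beta /\ cong M N x (numeral M c)) /\
    infinite_set M S.

Definition same_type (M0 M : PStruct) (f : car M0 -> car M) (k : nat)
  (a a' : nat -> car M) : Prop :=
  forall (p : formula) (e : nat -> car M0),
    sat M (fun i => if Nat.ltb i k then a i else f (e i)) p <->
    sat M (fun i => if Nat.ltb i k then a' i else f (e i)) p.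

(* Main.v *)
Require Import Defs.
From Stdlib Require Import ZArith List Arith Lia Classical ClassicalEpsilon ProofIrrelevance FunctionalExtensionality.
Import ListNotations.

Fixpoint trename (s : nat -> nat) (t : term) : term :=
  match t with
  | TVar n => TVar (s n)
  | TZero => TZero
  | TOne => TOne
  | TAdd t u => TAdd (trename s t) (trename s u)
  | TSub t u => TSub (trename s t) (trename s u)
  end.

Fixpoint rename (s : nat -> nat) (p : formula) : formula :=
  match p with
  | FEq t u => FEq (trename s t) (trename s u)
  | FLt t u => FLt (trename s t) (trename s u)
  | FCong n t u => FCong n (trename s t) (trename s u)
  | FFalse => FFalse
  | FNot p => FNot (rename s p)
  | FAnd p q => FAnd (rename s p) (rename s q)
  | FOr p q => FOr (rename s p) (rename s q)
  | FEx n p => FEx (s n) (rename s p)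
  | FAll n p => FAll (s n) (rename s p)
  end.

Lemma eval_ext M e e' t : (forall i, e i = e' i) -> eval M e t = eval M e' t.
Proof. intros H; induction t; simpl; congruence. Qed.

Lemma sat_ext M p : forall e e', (forall i, e i = e' i) -> (sat M e p <-> sat M e' p).
Proof.
  induction p; intros e e' H; simpl;
  try (rewrite !(eval_ext M e e') by exact H; tauto).
  - tauto.
  - rewrite (IHp e e' H); tauto.
  - rewrite (IHp1 e e' H), (IHp2 e e' H); tauto.
  - rewrite (IHp1 e e' H), (IHp2 e e' H); tauto.
  - split; intros [b Hb]; exists b; revert Hb; apply IHp; intro i; unfold upd;
    destruct (Nat.eqb i n); auto.
  - split; intros Hb b; specialize (Hb b); revert Hb; apply IHp; intro i; unfold upd;
    destruct (Nat.eqb i n); auto.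
Qed.

Lemma eval_rename M s e t : eval M e (trename s t) = eval M (fun i => e (s i)) t.
Proof. induction t; simpl; congruence. Qed.

Lemma upd_comp {M : PStruct} (s : nat -> nat) (e : nat -> car M) n b :
  (forall x y, s x = s y -> x = y) ->
  forall i, upd e (s n) b (s i) = upd (fun j => e (s j)) n b i.
Proof.
  intros Hs i; unfold upd.
  destruct (Nat.eqb_spec (s i) (s n)) as [E|E], (Nat.eqb_spec i n); subst; auto.
  - apply Hs in E; congruence.
  - congruence.
Qed.

Lemma sat_rename M s p : (forall x y, s x = s y -> x = y) ->
  forall e, sat M e (rename s p) <-> sat M (fun i => e (s i)) p.
Proof.
  intros Hs; induction p; intros e; simpl;
  try (rewrite !eval_rename; tauto).
  - tauto.
  - rewrite IHp; tauto.
  - rewrite IHp1, IHp2; tauto.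
  - rewrite IHp1, IHp2; tauto.
  - split; intros [b Hb]; exists b.
    + rewrite IHp in Hb; revert Hb; apply sat_ext; intro i; first [apply upd_comp; auto | symmetry; apply upd_comp; auto].
    + rewrite IHp; revert Hb; apply sat_ext; intro i; first [apply upd_comp; auto | symmetry; apply upd_comp; auto].
  - split; intros Hb b; specialize (Hb b).
    + rewrite IHp in Hb; revert Hb; apply sat_ext; intro i; first [apply upd_comp; auto | symmetry; apply upd_comp; auto].
    + rewrite IHp; revert Hb; apply sat_ext; intro i; first [apply upd_comp; auto | symmetry; apply upd_comp; auto].
Qed.

Definition merge {X : Type} (k : nat) (y e : nat -> X) : nat -> X :=
  fun i => if Nat.ltb i k then y i else e i.

Fixpoint exk (k : nat) (p : formula) : formula :=
  match k with 0 => p | S k => exk k (FEx k p) end.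

Lemma sat_exk M k : forall p e, sat M e (exk k p) <-> exists y, sat M (merge k y e) p.
Proof.
  induction k; intros p e; simpl.
  - split; [intros H; exists e; exact H | intros [y Hy]; exact Hy].
  - rewrite IHk. simpl. split.
    + intros [y [b Hb]]. exists (upd y k b). revert Hb; apply sat_ext; intro i.
      unfold upd, merge. destruct (Nat.eqb_spec i k), (Nat.ltb_spec i k), (Nat.ltb_spec i (S k)); auto; lia.
    + intros [y Hy]. exists y, (y k). revert Hy; apply sat_ext; intro i.
      unfold upd, merge. destruct (Nat.eqb_spec i k), (Nat.ltb_spec i k), (Nat.ltb_spec i (S k)); subst; auto; lia.
Qed.

Definition ev (K i : nat) : nat := if Nat.ltb i K then i else K + 2 * (i - K).
Definition od (K i : nat) : nat := if Nat.ltb i K then i else K + 2 * (i - K) + 1.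

Definition inter {X : Type} (K : nat) (d : X) (e1 e2 : nat -> X) : nat -> X :=
  fun i => if Nat.ltb i K then d
           else if Nat.even (i - K) then e1 (K + Nat.div2 (i - K))
           else e2 (K + Nat.div2 (i - K)).

Lemma ev_inj K : forall x y, ev K x = ev K y -> x = y.
Proof. intros x y; unfold ev; destruct (Nat.ltb_spec x K), (Nat.ltb_spec y K); lia. Qed.
Lemma od_inj K : forall x y, od K x = od K y -> x = y.
Proof. intros x y; unfold od; destruct (Nat.ltb_spec x K), (Nat.ltb_spec y K); lia. Qed.

Lemma even_2n n : Nat.even (2 * n) = true.
Proof. rewrite Nat.even_mul. reflexivity. Qed.
Lemma even_2n1 n : Nat.even (2 * n + 1) = false.
Proof. rewrite Nat.even_add, Nat.even_mul. reflexivity. Qed.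
Lemma div2_2n n : Nat.div2 (2 * n) = n.
Proof. apply Nat.div2_double. Qed.
Lemma div2_2n1 n : Nat.div2 (2 * n + 1) = n.
Proof. rewrite Nat.add_1_r. apply Nat.div2_succ_double. Qed.

Lemma merge_inter_ev {X} K (y : nat -> X) d e1 e2 i :
  merge K y (inter K d e1 e2) (ev K i) = merge K y e1 i.
Proof.
  unfold merge, inter, ev. destruct (Nat.ltb_spec i K).
  - destruct (Nat.ltb_spec i K); [reflexivity | lia].
  - destruct (Nat.ltb_spec (K + 2 * (i - K)) K); [lia|].
    replace (K + 2 * (i - K) - K) with (2 * (i - K)) by lia.
    rewrite even_2n, div2_2n. f_equal; lia.
Qed.

Lemma merge_inter_od {X} K (y : nat -> X) d e1 e2 i :
  merge K y (inter K d e1 e2) (od K i) = merge K y e2 i.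
Proof.
  unfold merge, inter, od. destruct (Nat.ltb_spec i K).
  - destruct (Nat.ltb_spec i K); [reflexivity | lia].
  - destruct (Nat.ltb_spec (K + 2 * (i - K) + 1) K); [lia|].
    replace (K + 2 * (i - K) + 1 - K) with (2 * (i - K) + 1) by lia.
    rewrite even_2n1, div2_2n1. f_equal; lia.
Qed.

Definition conj2 K p1 p2 := FAnd (rename (ev K) p1) (rename (od K) p2).

Lemma sat_conj2 M K y d e1 e2 p1 p2 :
  sat M (merge K y (inter K d e1 e2)) (conj2 K p1 p2) <->
  sat M (merge K y e1) p1 /\ sat M (merge K y e2) p2.
Proof.
  unfold conj2; simpl. rewrite !sat_rename by (apply ev_inj || apply od_inj).
  rewrite (sat_ext M p1 _ (merge K y e1)) by (intro; apply merge_inter_ev).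
  rewrite (sat_ext M p2 _ (merge K y e2)) by (intro; apply merge_inter_od).
  tauto.
Qed.

Fixpoint cf {A : Type} (K : nat) (l : list (formula * A)) : formula :=
  match l with
  | [] => FNot FFalse
  | (p, _) :: l => conj2 K p (cf K l)
  end.

Fixpoint ce {X : Type} (K : nat) (d : X) (l : list (formula * (nat -> X))) : nat -> X :=
  match l with
  | [] => fun _ => d
  | (_, e) :: l => inter K d e (ce K d l)
  end.

Lemma sat_cf M K d l : forall y,
  sat M (merge K y (ce K d l)) (cf K l) <->
  forall q, In q l -> sat M (merge K y (snd q)) (fst q).
Proof.
  induction l as [|[p e] l IH]; intros y; cbn [cf ce In].
  - simpl. split; [intros _ q [] | intros _ H; exact H].
  - rewrite sat_conj2, IH. split.
    + intros [H1 H2] q [<-|Hq]; auto.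
    + intros H; split; [apply (H (p, e)); auto | intros q Hq; apply H; auto].
Qed.

Lemma cf_map {A B : Type} K (g : A -> B) l :
  cf K (map (fun q => (fst q, g (snd q))) l) = cf K l.
Proof. induction l as [|[p e] l IH]; simpl; congruence. Qed.

Lemma ce_map {X Y : Type} K (f : X -> Y) d l i :
  f (ce K d l i) = ce K (f d) (map (fun q => (fst q, fun j => f (snd q j))) l) i.
Proof.
  revert i; induction l as [|[p e] l IH]; intros i; simpl; auto.
  unfold inter. destruct (Nat.ltb i K); auto. destruct (Nat.even (i - K)); auto.
Qed.

Lemma ce_B {X : Type} (Bp : X -> Prop) K d l :
  Bp d -> (forall q, In q l -> forall j, K <= j -> Bp (snd q j)) ->
  forall i, Bp (ce K d l i).
Proof.
  intros Hd; induction l as [|[p e] l IH]; intros Hl i; simpl; auto.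
  unfold inter. destruct (Nat.ltb_spec i K); auto.
  destruct (Nat.even (i - K)).
  - apply (Hl (p, e)); [left; auto | idtac]. apply Nat.le_add_r.
  - apply IH; intros q Hq; apply Hl; right; auto.
Qed.

Fixpoint tnum (n : nat) : term :=
  match n with 0 => TZero | S n => TAdd (tnum n) TOne end.

Lemma eval_tnum M e n : eval M e (tnum n) = numeral M n.
Proof. induction n; simpl; [reflexivity | rewrite IHn; reflexivity]. Qed.

Lemma numeral_Z n : numeral Zstr n = Z.of_nat n.
Proof. induction n; [reflexivity|]. change (numeral Zstr n + 1 = Z.of_nat (S n))%Z. rewrite IHn; lia. Qed.

Lemma evalZ_tnum e n : eval Zstr e (tnum n) = Z.of_nat n.
Proof. rewrite eval_tnum; apply numeral_Z. Qed.

Definition lef (t u : term) := FOr (FLt t u) (FEq t u).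

Definition env3 {X : Type} (x y z : X) : nat -> X :=
  fun i => match i with 0 => x | 1 => y | _ => z end.

Lemma Zgap (N z x c q1 q2 : Z) : (0 < N)%Z -> (z - c = q1 * N)%Z -> (x - c = q2 * N)%Z ->
  (z < x)%Z -> (x < z + N)%Z -> False.
Proof.
  intros HN H1 H2 H3 H4.
  assert (Hd : (x - z = (q2 - q1) * N)%Z) by lia.
  destruct (Z.le_gt_cases (q2 - q1) 0).
  - assert ((q2 - q1) * N <= 0)%Z by nia. lia.
  - assert ((q2 - q1) * N >= N)%Z by nia. lia.
Qed.

Section Facts.
Variable M : PStruct.
Hypothesis HM : presburger_model M.

Definition v0 := TVar 0. Definition v1 := TVar 1. Definition v2 := TVar 2.

Lemma irrefl x : ~ lt M x x.
Proof.
  pose proof (HM (FNot (FLt v0 v0))) as H.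
  refine (H _ (env3 x x x)). intros e; simpl; lia.
Qed.

Lemma trans x y z : lt M x y -> lt M y z -> lt M x z.
Proof.
  pose proof (HM (FOr (FNot (FAnd (FLt v0 v1) (FLt v1 v2))) (FLt v0 v2))) as H.
  specialize (H ltac:(intros e; simpl; lia) (env3 x y z)). simpl in H. tauto.
Qed.

Lemma total x y : lt M x y \/ x = y \/ lt M y x.
Proof.
  pose proof (HM (FOr (FLt v0 v1) (FOr (FEq v0 v1) (FLt v1 v0)))) as H.
  specialize (H ltac:(intros e; simpl; lia) (env3 x y x)). simpl in H. tauto.
Qed.

Lemma succ_gt x : lt M x (add M x (one M)).
Proof.
  pose proof (HM (FLt v0 (TAdd v0 TOne))) as H.
  specialize (H ltac:(intros e; simpl; lia) (env3 x x x)). simpl in H. tauto.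
Qed.

Lemma le_lt_succ x y : le M x y -> lt M x (add M y (one M)).
Proof.
  pose proof (HM (FOr (FNot (lef v0 v1)) (FLt v0 (TAdd v1 TOne)))) as H.
  specialize (H ltac:(intros e; simpl; lia) (env3 x y x)). simpl in H. unfold le. tauto.
Qed.

Lemma lt_pred x y : lt M x y -> le M x (sub M y (one M)).
Proof.
  pose proof (HM (FOr (FNot (FLt v0 v1)) (lef v0 (TSub v1 TOne)))) as H.
  specialize (H ltac:(intros e; simpl; lia) (env3 x y x)). simpl in H. unfold le. tauto.
Qed.

Lemma le_succ_pred x y : le M x (add M y (one M)) -> le M (sub M x (one M)) y.
Proof.
  pose proof (HM (FOr (FNot (lef v0 (TAdd v1 TOne))) (lef (TSub v0 TOne) v1))) as H.
  specialize (H ltac:(intros e; simpl; lia) (env3 x y x)). simpl in H. unfold le. tauto.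
Qed.

Lemma lt_le_trans x y z : lt M x y -> le M y z -> lt M x z.
Proof. intros H [H2|<-]; [eapply trans; eauto | auto]. Qed.
Lemma le_lt_trans x y z : le M x y -> lt M y z -> lt M x z.
Proof. intros [H|<-] H2; [eapply trans; eauto | auto]. Qed.
Lemma le_trans x y z : le M x y -> le M y z -> le M x z.
Proof. intros [H|<-] H2; [left; eapply lt_le_trans; eauto | auto]. Qed.
Lemma not_lt_le x y : ~ lt M x y -> le M y x.
Proof. intros H; destruct (total x y) as [?|[?|?]]; [tauto| right; auto | left; auto]. Qed.
Lemma antisym x y : le M x y -> le M y x -> x = y.
Proof.
  intros [H|H] [H2|H2]; auto.
  - exfalso; apply (irrefl x); eapply trans; eauto.
Qed.
Lemma le_not_lt x y : le M x y -> ~ lt M y x.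
Proof. intros H H2. apply (irrefl x). eapply le_lt_trans; eauto. Qed.

Variable N : positive.
Variable c : nat.
Let Nn := Pos.to_nat N.

Lemma cong_addN z : cong M N z (numeral M c) -> cong M N (add M z (numeral M Nn)) (numeral M c).
Proof.
  pose proof (HM (FOr (FNot (FCong N v0 (tnum c))) (FCong N (TAdd v0 (tnum Nn)) (tnum c)))) as H.
  specialize (H ltac:(intros e; simpl; rewrite !evalZ_tnum; unfold Nn; rewrite positive_nat_Z;
     intros; destruct (classic (Z.divide (Z.pos N) (e 0%nat - Z.of_nat c)%Z)) as [[q Hq]|Hn]; [right; exists (q+1)%Z; lia | left; auto])
    (env3 z z z)). simpl in H. rewrite !eval_tnum in H. tauto.
Qed.

Lemma cong_gap z x : cong M N z (numeral M c) -> cong M N x (numeral M c) ->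
  lt M z x -> lt M x (add M z (numeral M Nn)) -> False.
Proof.
  pose proof (HM (FNot (FAnd (FCong N v0 (tnum c)) (FAnd (FCong N v1 (tnum c))
     (FAnd (FLt v0 v1) (FLt v1 (TAdd v0 (tnum Nn)))))))) as H.
  specialize (H ltac:(intros e; simpl; rewrite !evalZ_tnum; unfold Nn; rewrite positive_nat_Z;
     intros [[q1 H1] [[q2 H2] [H3 H4]]]; eapply Zgap; [|exact H1|exact H2|exact H3|exact H4]; lia)
    (env3 z x z)). simpl in H. rewrite !eval_tnum in H. tauto.
Qed.

Lemma cong_floor m : exists z, cong M N z (numeral M c) /\ le M z m /\ lt M m (add M z (numeral M Nn)).
Proof.
  pose proof (HM (FEx 1 (FAnd (FCong N v1 (tnum c)) (FAnd (lef v1 v0) (FLt v0 (TAdd v1 (tnum Nn))))))) as H.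
  specialize (H ltac:(intros e; simpl;
     exists (e 0%nat - (e 0%nat - Z.of_nat c) mod (Z.pos N))%Z; unfold upd; simpl; rewrite !evalZ_tnum; unfold Nn; rewrite positive_nat_Z;
     split; [exists ((e 0%nat - Z.of_nat c) / Z.pos N)%Z;
       pose proof (Z.div_mod (e 0%nat - Z.of_nat c) (Z.pos N)); lia |
       pose proof (Z.mod_pos_bound (e 0%nat - Z.of_nat c) (Z.pos N)); lia])
    (env3 m m m)).
  simpl in H. destruct H as [z Hz]. exists z. unfold upd in Hz; simpl in Hz.
  rewrite !eval_tnum in Hz. unfold le. tauto.
Qed.

End Facts.

Lemma sig_eq {A : Type} (P : A -> Prop) (u v : {x | P x}) : proj1_sig u = proj1_sig v -> u = v.
Proof. destruct u, v; simpl; intros ->; f_equal; apply proof_irrelevance. Qed.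

Lemma numeral_lt M (HM : presburger_model M) n m : n < m -> lt M (numeral M n) (numeral M m).
Proof.
  induction m; intros H; [lia|].
  change (numeral M (S m)) with (add M (numeral M m) (one M)).
  destruct (Nat.eq_dec n m) as [->|Hne].
  - apply succ_gt; auto.
  - eapply trans; [auto | apply IHm; lia | apply succ_gt; auto].
Qed.

Lemma numeral_inj M (HM : presburger_model M) n m : numeral M n = numeral M m -> n = m.
Proof.
  intros H. destruct (Nat.lt_total n m) as [h|[h|h]]; auto;
  apply (numeral_lt M HM) in h; rewrite H in h; exfalso; eapply irrefl; eauto.
Qed.

Lemma small_add M (HM : presburger_model M) (B : car M -> Prop) b :
  small_subset M B -> small_subset M (fun x => B x \/ x = b).
Proof.
  intros HB [g Hg]. apply HB.
  destruct (classic (exists x0, proj1_sig (g x0) = b)) as [[x0 Hx0]|Hno].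
  - set (s := numeral M).
    set (h := fun x => match excluded_middle_informative (exists n, s n = x) with
                      | left H => s (S (proj1_sig (constructive_indefinite_description _ H)))
                      | right _ => x end).
    assert (Hh0 : forall x, h x <> s 0).
    { intros x; unfold h. destruct (excluded_middle_informative _) as [H|H].
      - intros E. apply numeral_inj in E; auto; discriminate.
      - intros E; apply H; exists 0; auto. }
    assert (Hhi : forall x y, h x = h y -> x = y).
    { intros x y; unfold h.
      destruct (excluded_middle_informative (exists n, s n = x)) as [H1|H1];
      destruct (excluded_middle_informative (exists n, s n = y)) as [H2|H2].
      - destruct (constructive_indefinite_description _ H1) as [n1 E1];
        destruct (constructive_indefinite_description _ H2) as [n2 E2]; simpl.
        intros E. change (s (S n1) = s (S n2)) in E. apply numeral_inj in E; auto. congruence.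
      - destruct (constructive_indefinite_description _ H1) as [n1 E1]; simpl.
        intros E; exfalso; apply H2; exists (S n1); auto.
      - destruct (constructive_indefinite_description _ H2) as [n2 E2]; simpl.
        intros E; exfalso; apply H1; exists (S n2); auto.
      - auto. }
    set (tau := fun x => if excluded_middle_informative (x = s 0) then x0
                         else if excluded_middle_informative (x = x0) then s 0 else x).
    assert (Htau : forall x y, tau x = tau y -> x = y).
    { intros x y; unfold tau.
      destruct (excluded_middle_informative (x = s 0)), (excluded_middle_informative (y = s 0));
      destruct (excluded_middle_informative (x = x0)), (excluded_middle_informative (y = x0));
      congruence. }
    assert (Htau0 : forall x, x <> s 0 -> tau x <> x0).
    { intros x Hx; unfold tau.
      destruct (excluded_middle_informative (x = s 0)); [congruence|].
      destruct (excluded_middle_informative (x = x0)); congruence. }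
    assert (HBx : forall x, B (proj1_sig (g (tau (h x))))).
    { intros x. destruct (proj2_sig (g (tau (h x)))) as [H|H]; auto.
      exfalso. apply (Htau0 (h x)); [apply Hh0|]. apply Hg. apply sig_eq. congruence. }
    exists (fun x => exist _ _ (HBx x)).
    intros x y E. apply (f_equal (@proj1_sig _ _)) in E; simpl in E.
    apply Hhi, Htau, Hg, sig_eq; auto.
  - assert (HBx : forall x, B (proj1_sig (g x))).
    { intros x. destruct (proj2_sig (g x)) as [H|H]; auto. exfalso; apply Hno; eauto. }
    exists (fun x => exist _ _ (HBx x)).
    intros x y E. apply (f_equal (@proj1_sig _ _)) in E; simpl in E.
    apply Hg, sig_eq; auto.
Qed.

Lemma small_range M0 M (f : car M0 -> car M) :
  small_model M0 M -> small_subset M (fun x => exists m, f m = x).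
Proof.
  intros H0 [g Hg]. apply H0.
  exists (fun x => proj1_sig (constructive_indefinite_description _ (proj2_sig (g x)))).
  intros x y E.
  destruct (constructive_indefinite_description _ (proj2_sig (g x))) as [m1 E1].
  destruct (constructive_indefinite_description _ (proj2_sig (g y))) as [m2 E2]. simpl in E.
  apply Hg, sig_eq. congruence.
Qed.

Lemma merge_upd {M : PStruct} k (y e0 : nat -> car M) b i :
  merge k y (upd e0 k b) i = merge (S k) (upd y k b) e0 i.
Proof.
  unfold merge, upd. destruct (Nat.ltb_spec i k), (Nat.ltb_spec i (S k)), (Nat.eqb_spec i k); auto; lia.
Qed.

Definition sw (k i : nat) : nat := if Nat.eqb i 0 then k else if Nat.eqb i k then 0 else i.

Lemma sw_inj k : forall x y, sw k x = sw k y -> x = y.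
Proof.
  intros x y; unfold sw.
  destruct (Nat.eqb_spec x 0), (Nat.eqb_spec y 0), (Nat.eqb_spec x k), (Nat.eqb_spec y k); lia.
Qed.

Section Realize.
Variable M : PStruct.
Hypothesis HM : presburger_model M.
Hypothesis Hsat : saturated M.
Variable d : car M.

Definition Eof k (l : list (formula * (nat -> car M))) : nat -> car M :=
  fun i => if Nat.leb i k then d else ce (S k) d l i.

Lemma merge_sw k y l b i :
  merge k y (fun j => upd (Eof k l) 0 b (sw k j)) i = merge (S k) (upd y k b) (ce (S k) d l) i.
Proof.
  unfold merge, upd, Eof, sw.
  destruct (Nat.ltb_spec i k), (Nat.ltb_spec i (S k)), (Nat.eqb_spec i k), (Nat.eqb_spec i 0); subst; auto; try lia.
  destruct (Nat.eqb_spec i 0); [lia|]. destruct (Nat.leb_spec i k); [lia|]. reflexivity.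
Qed.

Lemma key_sem k l b :
  sat M (upd (Eof k l) 0 b) (rename (sw k) (exk k (cf (S k) l))) <->
  exists y, forall r, In r l -> sat M (merge (S k) (upd y k b) (snd r)) (fst r).
Proof.
  rewrite sat_rename by apply sw_inj. rewrite sat_exk.
  split; intros [y Hy]; exists y.
  - rewrite (sat_ext M _ _ (merge (S k) (upd y k b) (ce (S k) d l))) in Hy by (intro; apply merge_sw).
    rewrite sat_cf in Hy. exact Hy.
  - rewrite (sat_ext M _ _ (merge (S k) (upd y k b) (ce (S k) d l))) by (intro; apply merge_sw).
    rewrite sat_cf. exact Hy.
Qed.

Lemma realize : forall k (B : car M -> Prop) (Phi : formula -> (nat -> car M) -> Prop),
  small_subset M B -> B d ->
  (forall p e, Phi p e -> forall i, k <= i -> B (e i)) ->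
  (forall l, (forall q, In q l -> Phi (fst q) (snd q)) ->
     exists y, forall q, In q l -> sat M (merge k y (snd q)) (fst q)) ->
  exists y, forall p e, Phi p e -> sat M (merge k y e) p.
Proof.
  induction k; intros B Phi HB Hd Hc Hfin.
  - exists (fun _ => d). intros p e HP.
    destruct (Hfin [(p, e)]) as [y Hy].
    + intros q [<-|[]]; auto.
    + specialize (Hy (p, e) (or_introl eq_refl)); simpl in Hy. revert Hy; apply sat_ext.
      intro i; reflexivity.
  - set (Psi := fun q E => exists l, (forall r, In r l -> Phi (fst r) (snd r)) /\
                 q = rename (sw k) (exk k (cf (S k) l)) /\ E = Eof k l).
    destruct (Hsat B HB Psi) as [b Hb].
    + intros q E [l [Hl [-> ->]]] i Hi. unfold Eof.
      destruct (Nat.leb i k); auto.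
      apply ce_B; auto. intros r Hr j Hj. apply (Hc (fst r) (snd r)); auto; lia.
    + intros lp Hlp.
      assert (HL : exists L, (forall r, In r L -> Phi (fst r) (snd r)) /\
                 forall q, In q lp -> exists l, incl l L /\
                   fst q = rename (sw k) (exk k (cf (S k) l)) /\ snd q = Eof k l).
      { induction lp as [|q lp IH].
        - exists []. split; [intros r []| intros q []].
        - destruct IH as [L [HL1 HL2]]; [intros; apply Hlp; right; auto|].
          destruct (Hlp q (or_introl eq_refl)) as [l [Hl [E1 E2]]].
          exists (l ++ L). split.
          + intros r Hr; apply in_app_or in Hr; destruct Hr; auto.
          + intros q' [<-|Hq'].
            * exists l; split; auto. intros r Hr; apply in_or_app; auto.
            * destruct (HL2 q' Hq') as [l' [Hi [E1' E2']]]. exists l'; split; auto.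
              intros r Hr; apply in_or_app; auto. }
      destruct HL as [L [HL1 HL2]].
      destruct (Hfin L HL1) as [y Hy].
      exists (y k). intros q Hq. destruct (HL2 q Hq) as [l [Hi [E1 E2]]].
      rewrite E1, E2, key_sem. exists y. intros r Hr.
      specialize (Hy r (Hi r Hr)). revert Hy; apply sat_ext.
      intro i; unfold merge, upd. destruct (Nat.ltb i (S k)); auto.
      destruct (Nat.eqb_spec i k); subst; auto.
    + set (Phi' := fun p e => exists e0, Phi p e0 /\ e = upd e0 k b).
      destruct (IHk (fun x => B x \/ x = b) Phi') as [y Hy].
      * apply small_add; auto.
      * left; auto.
      * intros p e [e0 [H0 ->]] i Hi. unfold upd. destruct (Nat.eqb_spec i k); auto.
        left. apply (Hc p e0); auto. lia.
      * intros lp Hlp.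
        assert (HL : exists L, (forall r, In r L -> Phi (fst r) (snd r)) /\
                 forall q, In q lp -> exists e0, In (fst q, e0) L /\ snd q = upd e0 k b).
        { induction lp as [|q lp IH].
          - exists []. split; [intros r []| intros q []].
          - destruct IH as [L [HL1 HL2]]; [intros; apply Hlp; right; auto|].
            destruct (Hlp q (or_introl eq_refl)) as [e0 [H0 E0]].
            exists ((fst q, e0) :: L). split.
            + intros r [<-|Hr]; auto.
            + intros q' [<-|Hq'].
              * exists e0; split; auto. left; auto.
              * destruct (HL2 q' Hq') as [e1 [Hi E1]]. exists e1; split; auto. right; auto. }
        destruct HL as [L [HL1 HL2]].
        assert (HP : Psi (rename (sw k) (exk k (cf (S k) L))) (Eof k L)).
        { exists L; auto. }
        specialize (Hb _ _ HP). rewrite key_sem in Hb. destruct Hb as [y Hy].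
        exists y. intros q Hq. destruct (HL2 q Hq) as [e0 [Hi E]]. rewrite E.
        specialize (Hy _ Hi); simpl in Hy. revert Hy; apply sat_ext.
        intro i; first [apply merge_upd | symmetry; apply merge_upd].
      * exists (upd y k b). intros p e HP.
        assert (HP' : Phi' p (upd e k b)) by (exists e; auto).
        specialize (Hy _ _ HP'). revert Hy; apply sat_ext. intro i; first [apply merge_upd | symmetry; apply merge_upd].
Qed.

End Realize.

Ltac crush := repeat (match goal with
 | |- context [Nat.leb ?a ?b] => destruct (Nat.leb_spec a b)
 | |- context [Nat.ltb ?a ?b] => destruct (Nat.ltb_spec a b)
 | |- context [Nat.eqb ?a ?b] => destruct (Nat.eqb_spec a b)
 end; try lia); try reflexivity; try lia; try (f_equal; lia).

Lemma Zmin (P : Z -> Prop) : (exists z, P z) -> (exists w, forall z, P z -> (w < z)%Z \/ w = z) ->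
  exists z, P z /\ forall w, (w < z)%Z -> ~ P w.
Proof.
  intros [z0 Hz0] [w Hw].
  assert (H : forall n z, Z.to_nat (z - w) = n -> P z -> exists z, P z /\ forall w, (w < z)%Z -> ~ P w).
  { induction n as [n IH] using lt_wf_ind. intros z Hn Hz.
    destruct (classic (exists w', (w' < z)%Z /\ P w')) as [[w' [H1 H2]]|Hno].
    - specialize (Hw w' H2). apply (IH (Z.to_nat (w' - w)) ltac:(lia) w'); auto.
    - exists z; split; auto. intros w' H1 H2; apply Hno; eauto. }
  eapply H; eauto.
Qed.


Section Schema.
Variable psi0 : formula.
Variable Z : nat.
Definition rho (i : nat) := if Nat.leb i Z then i else S i.
Definition rho1 (i : nat) := if Nat.ltb i Z then i else if Nat.eqb i Z then S Z else S i.
Definition W := S Z.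
Definition psi := rename rho psi0.
Definition psi1 := rename rho1 psi0.
Definition NE := FEx Z psi.
Definition BD := FEx W (FAll Z (FOr (FNot psi) (lef (TVar W) (TVar Z)))).
Definition HBODY := FAnd psi (FAll W (FOr (FNot (FLt (TVar W) (TVar Z))) (FNot psi1))).
Definition HMIN := FEx Z HBODY.
Definition SCH := FOr (FNot (FAnd NE BD)) HMIN.

Lemma rho_inj : forall x y, rho x = rho y -> x = y.
Proof. unfold rho; intros x y; destruct (Nat.leb_spec x Z), (Nat.leb_spec y Z); lia. Qed.
Lemma rho1_inj : forall x y, rho1 x = rho1 y -> x = y.
Proof. unfold rho1; intros x y; destruct (Nat.ltb_spec x Z), (Nat.ltb_spec y Z), (Nat.eqb_spec x Z), (Nat.eqb_spec y Z); lia. Qed.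

Section Sem.
Variable Mx : PStruct.
Variable e : nat -> car Mx.
Definition Pz z := sat Mx (upd (fun i => e (rho i)) Z z) psi0.

Lemma psi_sem z : sat Mx (upd e Z z) psi <-> Pz z.
Proof.
  unfold psi, Pz. rewrite sat_rename by apply rho_inj. apply sat_ext. intro i.
  unfold upd, rho. crush.
Qed.

Lemma NE_sem : sat Mx e NE <-> exists z, Pz z.
Proof. unfold NE; simpl. split; intros [z H]; exists z; apply psi_sem; auto. Qed.

Lemma BD_sem : sat Mx e BD <-> exists w, forall z, Pz z -> le Mx w z.
Proof.
  unfold BD; cbn [sat]. split; intros [w H]; exists w; intros z; specialize (H z).
  - intros Hz. destruct H as [H|H].
    + exfalso; apply H. unfold psi. rewrite sat_rename by apply rho_inj.
      unfold Pz in Hz. revert Hz; apply sat_ext. intro i. unfold upd, rho.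
      unfold W; crush.
    + unfold le. unfold lef in H; cbn [sat eval] in H. unfold upd in H.
      rewrite (proj2 (Nat.eqb_neq W Z)) in H by (unfold W; lia). rewrite !Nat.eqb_refl in H. exact H.
  - destruct (classic (Pz z)) as [Hz|Hz].
    + right. specialize (H Hz). unfold lef; cbn [sat eval]. unfold upd.
      rewrite (proj2 (Nat.eqb_neq W Z)) by (unfold W; lia). rewrite !Nat.eqb_refl. exact H.
    + left. intros H2; apply Hz. unfold psi in H2. rewrite sat_rename in H2 by apply rho_inj.
      unfold Pz. revert H2; apply sat_ext. intro i. unfold upd, rho.
      unfold W; crush.
Qed.

Lemma psi1_sem z w : sat Mx (upd (upd e Z z) W w) psi1 <-> Pz w.
Proof.
  unfold psi1, Pz. rewrite sat_rename by apply rho1_inj. apply sat_ext. intro i.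
  unfold upd, rho1, rho, W.
  crush.
Qed.

Lemma HBODY_sem z : sat Mx (upd e Z z) HBODY <-> Pz z /\ forall w, lt Mx w z -> ~ Pz w.
Proof.
  unfold HBODY. cbn [sat]. rewrite psi_sem.
  assert (Hev : forall w, eval Mx (upd (upd e Z z) W w) (TVar W) = w /\
                          eval Mx (upd (upd e Z z) W w) (TVar Z) = z).
  { intros w; simpl; unfold upd, W. rewrite Nat.eqb_refl.
    destruct (Nat.eqb_spec Z (S Z)); [lia|]. rewrite Nat.eqb_refl. auto. }
  split; intros [H1 H2]; split; auto.
  - intros w Hw Hp. destruct (H2 w) as [H|H].
    + destruct (Hev w) as [E1 E2]. rewrite E1, E2 in H. auto.
    + apply H. apply psi1_sem; auto.
  - intros w. destruct (Hev w) as [E1 E2]. rewrite E1, E2.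
    destruct (classic (lt Mx w z)) as [h|h]; [right|left; auto].
    rewrite psi1_sem. apply H2; auto.
Qed.

Lemma HMIN_sem : sat Mx e HMIN <-> exists z, Pz z /\ forall w, lt Mx w z -> ~ Pz w.
Proof. unfold HMIN. cbn [sat]. split; intros [z H]; exists z; apply HBODY_sem; auto. Qed.

Lemma SCH_sem : sat Mx e SCH <->
  ~ ((exists z, Pz z) /\ (exists w, forall z, Pz z -> le Mx w z)) \/
  (exists z, Pz z /\ forall w, lt Mx w z -> ~ Pz w).
Proof. unfold SCH. cbn [sat]. rewrite NE_sem, BD_sem, HMIN_sem. tauto. Qed.
End Sem.

Lemma SCH_valid : forall e, sat Zstr e SCH.
Proof.
  intros e. apply SCH_sem.
  destruct (classic ((exists z, Pz Zstr e z) /\ (exists w, forall z, Pz Zstr e z -> le Zstr w z))) as [[H1 H2]|H]; [right|left; auto].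
  apply Zmin; auto.
Qed.

End Schema.

Section Main.
Variables (M M0 : PStruct) (f : car M0 -> car M) (phi : formula) (k : nat) (a : nat -> car M).
Hypothesis HM : presburger_model M.
Hypothesis Hel : elementary_emb M0 M f.

Lemma HM0 : presburger_model M0.
Proof. intros p Hp e. apply Hel. apply HM. auto. Qed.

Lemma f_zero : f (zero M0) = zero M.
Proof.
  pose proof (proj1 (Hel (FEq (TVar 0) TZero) (fun _ => zero M0)) eq_refl) as H. exact H.
Qed.

Lemma f_lt x y : lt M0 x y -> lt M (f x) (f y).
Proof. intros H. exact (proj1 (Hel (FLt v0 v1) (env3 x y x)) H). Qed.

Lemma f_le x y : le M0 x y -> le M (f x) (f y).
Proof. intros [H|<-]; [left; apply f_lt; auto | right; auto]. Qed.

Lemma f_cong N c x : cong M0 N x (numeral M0 c) -> cong M N (f x) (numeral M c).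
Proof.
  intros H. pose proof (proj1 (Hel (FCong N v0 (tnum c)) (env3 x x x))) as H2.
  cbn [sat eval] in H2. rewrite !eval_tnum in H2. apply H2. exact H.
Qed.

Lemma f_addnum z n : f (add M0 z (numeral M0 n)) = add M (f z) (numeral M n).
Proof.
  pose proof (proj1 (Hel (FEq v0 (TAdd v1 (tnum n))) (env3 (add M0 z (numeral M0 n)) z z))) as H2.
  cbn [sat eval] in H2. rewrite !eval_tnum in H2. apply H2. reflexivity.
Qed.

Lemma f_sub1 u : f (sub M0 u (one M0)) = sub M (f u) (one M).
Proof.
  pose proof (proj1 (Hel (FEq v0 (TSub v1 TOne)) (env3 (sub M0 u (one M0)) u u))) as H2.
  apply H2. reflexivity.
Qed.

Definition S0 := defset M phi k a.
Hypothesis Hshape : single_point M S0 \/ bounded_1cell M S0.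
Hypothesis Hdisj : forall m : car M0, ~ S0 (f m).

Lemma interval : exists al be, (forall x, S0 x -> le M al x) /\ (forall x, S0 x -> le M x be) /\
  (forall m0, le M al (f m0) -> le M (f m0) be -> False).
Proof.
  destruct Hshape as [[p Hp]|[al [be [N [c [Hc [Hiff Hinf]]]]]]].
  - exists p, p. split; [|split].
    + intros x Hx; apply Hp in Hx; subst; right; auto.
    + intros x Hx; apply Hp in Hx; subst; right; auto.
    + intros m0 H1 H2. apply (Hdisj m0). apply Hp. symmetry; apply antisym; auto.
  - exists al, be. split; [|split].
    + intros x Hx; apply Hiff in Hx; tauto.
    + intros x Hx; apply Hiff in Hx; tauto.
    + intros m0 H1 H2.
      destruct (classic (exists x0, S0 x0)) as [[x0 Hx0]|Hne];
        [| apply Hinf; exists []; intros x Hx; apply Hne; eauto].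
      destruct (cong_floor M0 HM0 N c m0) as [z0 [Hz1 [Hz2 Hz3]]].
      apply f_cong in Hz1. apply f_le in Hz2. apply f_lt in Hz3. rewrite f_addnum in Hz3.
      destruct (total M HM al (f z0)) as [h|[h|h]].
      * apply (Hdisj z0). apply Hiff. split; [left; auto|split; auto].
        eapply le_trans; eauto.
      * apply (Hdisj z0). apply Hiff. split; [right; auto|split; auto].
        eapply le_trans; eauto.
      * set (w0 := add M0 z0 (numeral M0 (Pos.to_nat N))).
        assert (Hw : f w0 = add M (f z0) (numeral M (Pos.to_nat N))) by apply f_addnum.
        destruct (classic (le M (f w0) be)) as [hb|hb].
        -- apply (Hdisj w0). apply Hiff. split; [|split; auto].
           ++ left. rewrite Hw. eapply le_lt_trans; eauto.
           ++ rewrite Hw. apply cong_addN; auto.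
        -- assert (hb' : lt M be (f w0)).
           { destruct (total M HM be (f w0)) as [?|[?|?]]; auto; exfalso; apply hb;
             [right; auto | left; auto]. }
           apply Hiff in Hx0. destruct Hx0 as [X1 [X2 X3]].
           apply (cong_gap M HM N c (f z0) x0); auto.
           ++ eapply lt_le_trans; eauto.
           ++ rewrite <- Hw. eapply le_lt_trans; eauto.
Qed.

Definition sigphi (i : nat) : nat :=
  match i with 0 => k | S j => if Nat.ltb j k then j else S (S j) end.

Lemma sigphi_inj : forall x y, sigphi x = sigphi y -> x = y.
Proof.
  intros [|x] [|y]; unfold sigphi; try destruct (Nat.ltb_spec x k); try destruct (Nat.ltb_spec y k); lia.
Qed.

Definition chi := FAll k (FOr (FNot (rename sigphi phi)) (FLt (TVar k) (TVar (S k)))).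

Lemma chi_sem y E : (forall i, S (S k) <= i -> E i = zero M) ->
  (sat M (merge k y E) chi <-> forall x, defset M phi k y x -> lt M x (E (S k))).
Proof.
  intros HE. unfold chi. cbn [sat eval].
  assert (Hk : forall b, upd (merge k y E) k b k = b /\ upd (merge k y E) k b (S k) = E (S k)).
  { intros b; unfold upd, merge. rewrite Nat.eqb_refl. split; auto.
    destruct (Nat.eqb_spec (S k) k); [lia|]. destruct (Nat.ltb_spec (S k) k); [lia|auto]. }
  assert (Hd : forall b, sat M (upd (merge k y E) k b) (rename sigphi phi) <-> defset M phi k y b).
  { intros b. rewrite sat_rename by apply sigphi_inj. unfold defset. apply sat_ext.
    intros [|j]; unfold upd, merge, sigphi.
    - rewrite Nat.eqb_refl; auto.
    - destruct (Nat.ltb_spec j k).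
      + destruct (Nat.eqb_spec j k); [lia|]. destruct (Nat.ltb_spec j k); [auto|lia].
      + destruct (Nat.eqb_spec (S (S j)) k); [lia|]. destruct (Nat.ltb_spec (S (S j)) k); [lia|].
        apply HE; lia. }
  split.
  - intros H x Hx. destruct (H x) as [H1|H1].
    + exfalso; apply H1; apply Hd; auto.
    + destruct (Hk x) as [E1 E2]. rewrite E1, E2 in H1. auto.
  - intros H b. destruct (classic (defset M phi k y b)) as [h|h].
    + right. destruct (Hk b) as [E1 E2]. rewrite E1, E2. auto.
    + left. rewrite Hd. auto.
Qed.

Definition Echi (z : car M) : nat -> car M := fun i => if Nat.eqb i (S k) then z else zero M.

Lemma Echi_zero z : forall i, S (S k) <= i -> Echi z i = zero M.
Proof. intros i Hi; unfold Echi; destruct (Nat.eqb_spec i (S k)); [lia|auto]. Qed.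

Lemma Echi_k z : Echi z (S k) = z.
Proof. unfold Echi; rewrite Nat.eqb_refl; auto. Qed.

Lemma key al be (HL : forall x, S0 x -> le M al x) (HR : forall x, S0 x -> le M x be)
  (HN : forall m0, le M al (f m0) -> le M (f m0) be -> False)
  theta (E0 : nat -> car M0) :
  sat M (merge k a (fun i => f (E0 i))) theta ->
  exists y, sat M (merge k y (fun i => f (E0 i))) theta /\ forall x, defset M phi k y x -> lt M x al.
Proof.
  intros Ha. apply NNPP; intros H.
  set (Zi := k + 3).
  set (psi0 := exk k (conj2 k theta chi)).
  set (G := fun z => inter k (f (zero M0)) (fun i => f (E0 i)) (Echi z)).
  set (U := fun z => exists y, sat M (merge k y (fun i => f (E0 i))) theta /\
                     forall x, defset M phi k y x -> lt M x z).
  assert (HU : forall z, sat M (G z) psi0 <-> U z).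
  { intros z. unfold psi0, G, U. rewrite sat_exk. split; intros [y Hy]; exists y.
    - rewrite sat_conj2, chi_sem, Echi_k in Hy by apply Echi_zero. exact Hy.
    - rewrite sat_conj2, chi_sem, Echi_k by apply Echi_zero. exact Hy. }
  set (G0 := inter k (zero M0) E0 (fun _ => zero M0)).
  set (e0 := fun i => if Nat.leb i Zi then G0 i else G0 (i - 1)).
  assert (HP : forall z, Pz psi0 Zi M (fun i => f (e0 i)) z <-> U z).
  { intros z. rewrite <- HU. unfold Pz. apply sat_ext. intros i.
    unfold upd, rho, e0, G0, G, inter.
    destruct (Nat.eqb_spec i Zi).
    - subst i. unfold Zi. destruct (Nat.ltb_spec (k + 3) k); [lia|].
      replace (k + 3 - k) with 3 by lia. simpl. unfold Echi; destruct (Nat.eqb_spec (k+1) (S k)); [auto|lia].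
    - assert (Hi : (if Nat.leb (if Nat.leb i Zi then i else S i) Zi
                    then G0 (if Nat.leb i Zi then i else S i)
                    else G0 ((if Nat.leb i Zi then i else S i) - 1)) = G0 i).
      { destruct (Nat.leb_spec i Zi).
        - destruct (Nat.leb_spec i Zi); [auto|lia].
        - destruct (Nat.leb_spec (S i) Zi); [lia|]. f_equal; lia. }
      unfold G0, inter in Hi. rewrite Hi.
      destruct (Nat.ltb_spec i k); auto.
      remember (Nat.even (i - k)) as ev0. destruct ev0; auto.
      unfold Echi. destruct (Nat.eqb_spec (k + Nat.div2 (i - k)) (S k)); [|apply f_zero].
      exfalso. pose proof (Nat.div2_odd (i - k)) as Hd.
      rewrite <- Nat.negb_even, <- Heqev0 in Hd. simpl in Hd. unfold Zi in n. lia. }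
  assert (HUbe : U (add M be (one M))).
  { exists a. split; auto. intros x Hx. apply le_lt_succ; auto. }
  assert (Hbnd : forall z, U z -> lt M al z).
  { intros z Hz. destruct (total M HM al z) as [h|[h|h]]; auto.
    - exfalso; apply H. subst z. exact Hz.
    - exfalso; apply H. destruct Hz as [y [Hy1 Hy2]]. exists y; split; auto.
      intros x Hx. eapply trans; eauto. }
  assert (HNE : sat M0 e0 (NE psi0 Zi)).
  { apply Hel. apply NE_sem. exists (add M be (one M)). apply HP. auto. }
  assert (HBD : sat M0 e0 (BD psi0 Zi)).
  { apply Hel. apply BD_sem. exists al. intros z Hz. left. apply Hbnd. apply HP. auto. }
  pose proof (HM0 (SCH psi0 Zi) (SCH_valid psi0 Zi) e0) as Hsch.
  unfold SCH in Hsch. cbn [sat] in Hsch. destruct Hsch as [Hsch|Hsch]; [tauto|].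
  unfold HMIN in Hsch. cbn [sat] in Hsch. destruct Hsch as [u0 Hu0].
  apply Hel in Hu0.
  rewrite (sat_ext M _ _ (upd (fun i => f (e0 i)) Zi (f u0))) in Hu0
    by (intro i; unfold upd; destruct (Nat.eqb i Zi); auto).
  apply HBODY_sem in Hu0. destruct Hu0 as [Hu1 Hu2].
  apply HP in Hu1.
  assert (Hle : le M (f u0) (add M be (one M))).
  { apply not_lt_le; auto. intros h. apply (Hu2 _ h). apply HP. auto. }
  assert (Hlt : lt M al (f u0)) by (apply Hbnd; auto).
  apply (HN (sub M0 u0 (one M0))); rewrite f_sub1.
  - apply lt_pred; auto.
  - apply le_succ_pred; auto.
Qed.

End Main.

Theorem lemma4p6 (M M0 : PStruct) (f : car M0 -> car M)
  (phi : formula) (k : nat) (a : nat -> car M) :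
  presburger_model M ->
  saturated M ->
  elementary_emb M0 M f ->
  small_model M0 M ->
  (single_point M (defset M phi k a) \/ bounded_1cell M (defset M phi k a)) ->
  (forall m : car M0, ~ defset M phi k a (f m)) ->
  exists a' : nat -> car M,
    same_type M0 M f k a a' /\
    (forall x : car M, ~ (defset M phi k a x /\ defset M phi k a' x)).
Proof.
  intros HM Hsat Hel Hsm Hshape Hdisj.
  destruct (interval M M0 f phi k a HM Hel Hshape Hdisj) as [al [be [HL [HR HN]]]].
  set (d := f (zero M0)).
  set (B := fun x => (exists m, f m = x) \/ x = al).
  set (Phi := fun p e => (exists e0 : nat -> car M0, e = (fun i => f (e0 i)) /\ sat M (merge k a e) p)
                         \/ (p = chi phi k /\ e = Echi M k al)).
  destruct (realize M HM Hsat d k B Phi) as [a' Ha'].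
  - apply small_add; auto. apply small_range; auto.
  - left; exists (zero M0); auto.
  - intros p e [[e0 [-> _]]|[-> ->]] i Hi.
    + left; eauto.
    + unfold Echi. destruct (Nat.eqb i (S k)); [right; auto|left; exists (zero M0); apply (f_zero M M0 f Hel)].
  - intros l Hl.
    assert (HL0 : exists L0 : list (formula * (nat -> car M0)),
      (forall r, In r L0 -> sat M (merge k a (fun i => f (snd r i))) (fst r)) /\
      forall q, In q l -> (exists e0, In (fst q, e0) L0 /\ snd q = (fun i => f (e0 i))) \/
                          (fst q = chi phi k /\ snd q = Echi M k al)).
    { induction l as [|q l IH].
      - exists []. split; [intros r []|intros q []].
      - destruct IH as [L0 [H1 H2]]; [intros; apply Hl; right; auto|].
        destruct (Hl q (or_introl eq_refl)) as [[e0 [E Hs]]|[E1 E2]].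
        + exists ((fst q, e0) :: L0). split.
          * intros r [<-|Hr]; auto. simpl. rewrite <- E. auto.
          * intros q' [<-|Hq'].
            -- left. exists e0; split; auto. left; auto.
            -- destruct (H2 q' Hq') as [[e1 [Hi E']]|?]; auto. left; exists e1; split; auto. right; auto.
        + exists L0. split; auto. intros q' [<-|Hq']; auto. }
    destruct HL0 as [L0 [HL1 HL2]].
    set (theta := cf k L0). set (E0 := ce k (zero M0) L0).
    assert (Hcf : forall y, sat M (merge k y (fun i => f (E0 i))) theta <->
              forall r, In r L0 -> sat M (merge k y (fun i => f (snd r i))) (fst r)).
    { intros y.
      rewrite (sat_ext M theta _ (merge k y (ce k (f (zero M0)) (map (fun q => (fst q, fun j => f (snd q j))) L0))))
        by (intro i; unfold merge; destruct (Nat.ltb i k); auto; apply ce_map).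
      assert (Heq : cf k (map (fun q => (fst q, fun j => f (snd q j))) L0) = theta)
        by exact (cf_map k (fun e j => f (e j)) L0).
      rewrite <- Heq, sat_cf. split; intros H r Hr.
      - apply (H (fst r, fun j => f (snd r j))). apply in_map_iff; exists r; auto.
      - apply in_map_iff in Hr; destruct Hr as [r' [<- Hr']]; simpl; apply H; auto. }
    destruct (key M M0 f phi k a HM Hel Hshape al be HL HR HN theta E0 (proj2 (Hcf a) HL1))
      as [y [Hy1 Hy2]].
    exists y. intros q Hq. destruct (HL2 q Hq) as [[e0 [Hin E]]|[E1 E2]].
    + rewrite E. apply (proj1 (Hcf y) Hy1 _ Hin).
    + rewrite E1, E2. apply chi_sem; [intros; apply Echi_zero; auto|]. rewrite Echi_k. auto.
  - exists a'. split.
    + intros p e. split; intros H.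
      * apply (Ha' p (fun i => f (e i))). left. exists e; split; auto.
      * apply NNPP; intro Hn.
        assert (HP : Phi (FNot p) (fun i => f (e i))) by (left; exists e; split; auto).
        apply Ha' in HP. exact (HP H).
    + intros x [H1 H2].
      assert (HP : Phi (chi phi k) (Echi M k al)) by (right; auto).
      apply Ha' in HP. rewrite chi_sem in HP by (intros; apply Echi_zero; auto).
      rewrite Echi_k in HP. apply (le_not_lt M HM al x); auto.
Qed.
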